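(* Let $P^1,\dots,P^m\in\mathbb{R}^n$ ($m\ge2$) be in general position. For $k=0,1,\dots,m-2$ let $L_k=L(P^{k+1},\dots,P^m)$. Let $Q^0\in L_0$ be the equidistant point from $P^1,\dots,P^m$, and define recursively $Q^k=\pi(Q^{k-1}\,|\,L_k)$ for $k=1,\dots,m-2$. Let $\boldsymbol\lambda^k=(\lambda^k_1,\dots,\lambda^k_m)$ be the barycentric coordinate of $Q^k$ about $P^1,\dots,P^m$. Let $K\in\{0,1,\dots,m-2\}$ and assume: for every $k=0,1,\dots,K-1$, $\lambda^k_i=0$ for $i=1,\dots,k$, $\lambda^k_{k+1}<0$, and $\lambda^k_i>0$ for $i=k+2,\dots,m$; and $\lambda^K_i=0$ for $i=1,\dots,K$ and $\lambda^K_i>0$ for $i=K+1,\dots,m$. Then the center of the smallest enclosing circle of $P^1,\dots,P^m$ is $Q^\ast=Q^K$ and its radius is $d^\ast=d(P^{K+1},Q^K)$.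
   Context: $d$ is the Euclidean distance on $\mathbb{R}^n$. Points $P^1,\dots,P^m$ are in general position if $P^2-P^1,\dots,P^m-P^1$ are linearly independent. $L(S^1,\dots,S^r)$ denotes the affine subspace spanned by the points $S^1,\dots,S^r$ (all affine combinations). For $Q'\in\mathbb{R}^n$ and an affine subspace $L$, $\pi(Q'|L)$ is the orthogonal projection, i.e. the unique $Q\in L$ minimizing $d(Q,Q')$. The barycentric coordinate of $Q\in L(P^1,\dots,P^m)$ about $P^1,\dots,P^m$ is the unique $\boldsymbol\lambda\in\mathbb{R}^m$ with $\sum_i\lambda_i=1$ and $Q=\sum_i\lambda_iP^i$. The equidistant point is the unique $Q^0\in L(P^1,\dots,P^m)$ with $d(P^1,Q^0)=\dots=d(P^m,Q^0)$. The smallest enclosing circle of $P^1,\dots,P^m$ is the ball whose center $Q^\ast$ attains $\min_{Q\in\mathbb{R}^n}\max_{1\le i\le m}d(P^i,Q)$ and whose radius $d^\ast$ is this minimum value. *)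

(* Defs.v *)
From HB Require Import structures.
From mathcomp Require Import all_boot all_order all_algebra.
Set Implicit Arguments. Unset Strict Implicit. Unset Printing Implicit Defensive.
Import Order.TTheory GRing.Theory Num.Theory.
Local Open Scope ring_scope.

Section Defs.
Variables (R : rcfType) (n m : nat).

Definition dist (x y : 'rV[R]_n) : R :=
  Num.sqrt (\sum_(j < n) (x 0 j - y 0 j) ^+ 2).

(* P^1..P^m (0-based: P 0 .. P (m-1)) in general position:
   P i - P i0 (i <> i0, i0 the first index) are linearly independent. *)
Definition general_position (P : 'I_m -> 'rV[R]_n) : Prop :=
  forall i0 : 'I_m, val i0 = 0%N ->
  forall c : 'I_m -> R,
    \sum_(i | i != i0) c i *: (P i - P i0) = 0 ->
    forall i, i != i0 -> c i = 0.

Definition affine_span (P : 'I_m -> 'rV[R]_n) (S : pred 'I_m) : 'rV[R]_n -> Prop :=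
  fun x => exists lam : 'I_m -> R,
    (forall i, ~~ S i -> lam i = 0) /\ \sum_i lam i = 1 /\ x = \sum_i lam i *: P i.

(* L_k = L(P^{k+1},...,P^m) in 1-based indexing = span of P i, k <= i (0-based) *)
Definition Lk (P : 'I_m -> 'rV[R]_n) (k : nat) : 'rV[R]_n -> Prop :=
  affine_span P (fun i => (k <= val i)%N).

Definition is_proj (L : 'rV[R]_n -> Prop) (Q' Q : 'rV[R]_n) : Prop :=
  L Q /\ forall Q2, L Q2 -> dist Q Q' <= dist Q2 Q'.

Definition is_bary (P : 'I_m -> 'rV[R]_n) (Q : 'rV[R]_n) (lam : 'I_m -> R) : Prop :=
  \sum_i lam i = 1 /\ Q = \sum_i lam i *: P i.

Definition is_equidistant (P : 'I_m -> 'rV[R]_n) (Q : 'rV[R]_n) : Prop :=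
  Lk P 0 Q /\ forall i j, dist (P i) Q = dist (P j) Q.

Definition maxdist (P : 'I_m -> 'rV[R]_n) (Q : 'rV[R]_n) : R :=
  \big[Num.max/0]_(i < m) dist (P i) Q.

Definition sec_center (P : 'I_m -> 'rV[R]_n) (Q : 'rV[R]_n) : Prop :=
  forall Q', maxdist P Q <= maxdist P Q'.

Definition sec_radius (P : 'I_m -> 'rV[R]_n) (d : R) : Prop :=
  exists Q, sec_center P Q /\ d = maxdist P Q.

End Defs.

(* Main.v *)
Require Import Defs.
From mathcomp Require Import all_boot all_order all_algebra.
From mathcomp Require Import ring lra zify.
Import Order.TTheory GRing.Theory Num.Theory.
Local Open Scope ring_scope.
Set Implicit Arguments. Unset Strict Implicit. Unset Printing Implicit Defensive.
Section H.
Variables (R : rcfType) (n : nat).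
Implicit Types x y z v w : 'rV[R]_n.

Definition ip x y : R := \sum_(j < n) x 0 j * y 0 j.

Lemma ipC x y : ip x y = ip y x.
Proof. by apply: eq_bigr => j _; rewrite mulrC. Qed.
Lemma ipDl x y z : ip (x + y) z = ip x z + ip y z.
Proof. by rewrite /ip -big_split; apply: eq_bigr => j _; rewrite mxE mulrDl. Qed.
Lemma ipNl x y : ip (- x) y = - ip x y.
Proof. by rewrite /ip -sumrN; apply: eq_bigr => j _; rewrite mxE mulNr. Qed.
Lemma ipBl x y z : ip (x - y) z = ip x z - ip y z.
Proof. by rewrite ipDl ipNl. Qed.
Lemma ipZl a x y : ip (a *: x) y = a * ip x y.
Proof. by rewrite /ip mulr_sumr; apply: eq_bigr => j _; rewrite mxE mulrA. Qed.
Lemma ip0l y : ip 0 y = 0.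
Proof. by rewrite /ip big1 // => j _; rewrite mxE mul0r. Qed.
Lemma ipDr x y z : ip z (x + y) = ip z x + ip z y.
Proof. by rewrite ipC ipDl !(ipC z). Qed.
Lemma ipBr x y z : ip z (x - y) = ip z x - ip z y.
Proof. by rewrite ipC ipBl !(ipC z). Qed.
Lemma ipZr a x y : ip y (a *: x) = a * ip y x.
Proof. by rewrite ipC ipZl ipC. Qed.
Lemma ip0r y : ip y 0 = 0.
Proof. by rewrite ipC ip0l. Qed.
Lemma ip_suml (I : finType) (F : I -> 'rV[R]_n) y :
  ip (\sum_i F i) y = \sum_i ip (F i) y.
Proof. exact: (big_morph (fun x => ip x y) (fun a b => ipDl a b y) (ip0l y)). Qed.
Lemma ip_sumr (I : finType) (F : I -> 'rV[R]_n) y :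
  ip y (\sum_i F i) = \sum_i ip y (F i).
Proof. by rewrite ipC ip_suml; apply: eq_bigr => i _; rewrite ipC. Qed.
Lemma ip_ge0 x : 0 <= ip x x.
Proof. by apply: sumr_ge0 => j _; rewrite -expr2 sqr_ge0. Qed.
Lemma ip_eq0 x : ip x x = 0 -> x = 0.
Proof.
move=> h; apply/rowP => j; rewrite mxE.
have h2 : \sum_(j < n) x 0 j ^+ 2 = 0.
  by rewrite -[RHS]h; apply: eq_bigr => k _; rewrite expr2.
have := psumr_eq0P (fun j _ => (sqr_ge0 (x 0 j))) h2 (i:=j) isT.
by move/eqP; rewrite sqrf_eq0 => /eqP.
Qed.
Lemma ip_expand x y : ip (x + y) (x + y) = ip x x + 2 * ip x y + ip y y.
Proof. rewrite ipDl !ipDr (ipC y x); ring. Qed.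
Lemma dist_ip x y : dist x y = Num.sqrt (ip (x - y) (x - y)).
Proof. by rewrite /dist /ip; congr Num.sqrt; apply: eq_bigr => j _; rewrite !mxE expr2. Qed.

Lemma ip_bary (m : nat) (P : 'I_m -> 'rV[R]_n) (l : 'I_m -> R) v z :
  \sum_i l i = 1 -> ip v (\sum_i l i *: P i - z) = \sum_i l i * ip v (P i - z).
Proof.
move=> hs.
have -> : \sum_i l i *: P i - z = \sum_i l i *: (P i - z).
  rewrite [RHS](eq_bigr (fun i => l i *: P i - l i *: z)); last by move=> i _; rewrite scalerBr.
  by rewrite sumrB -scaler_suml hs scale1r.
by rewrite ip_sumr; apply: eq_bigr => i _; rewrite ipZr.
Qed.

End H.
Section G.
Variables (R : rcfType) (n m : nat) (P : 'I_m -> 'rV[R]_n).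

Lemma Lk_P k (i : 'I_m) : (k <= val i)%N -> Lk P k (P i).
Proof.
move=> hi; exists (fun j => (j == i)%:R); split; [|split].
- move=> j hj; case: eqP => // e; by rewrite e hi in hj.
- by rewrite (bigD1 i) //= eqxx big1 ?addr0 // => j /negbTE ->.
- rewrite (bigD1 i) //= eqxx scale1r big1 ?addr0 // => j /negbTE ->.
  by rewrite scale0r.
Qed.

Lemma Lk_comb k x y t : Lk P k x -> Lk P k y -> Lk P k ((1 - t) *: x + t *: y).
Proof.
move=> [lx [zx [sx ex]]] [ly [zy [sy ey]]].
exists (fun j => (1 - t) * lx j + t * ly j); split; [|split].
- by move=> j hj; rewrite zx // zy // !mulr0 addr0.
- by rewrite big_split -!mulr_sumr sx sy /= !mulr1 subrK.
- rewrite ex ey !scaler_sumr -big_split /=; apply: eq_bigr => j _.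
  by rewrite [RHS]scalerDl !scalerA.
Qed.

Lemma proj_orth k Q' Q X : is_proj (Lk P k) Q' Q -> Lk P k X ->
  ip (Q - Q') (X - Q) = 0.
Proof.
move=> [HL Hmin] HX.
set a := Q - Q'; set w := X - Q; set b := ip a w; set c := ip w w.
have hc : 0 <= c by apply: ip_ge0.
have ht : forall t, ip a a <= ip a a + 2 * (t * b) + t * (t * c).
  move=> t; have := Hmin _ (Lk_comb t HL HX).
  rewrite !dist_ip ler_sqrt ?ip_ge0 //.
  have -> : (1 - t) *: Q + t *: X - Q' = a + t *: w.
    by apply/rowP => j; rewrite /a /w !mxE; ring.
  by rewrite (ip_expand a (t *: w)) ipZr ipZl ipZr.
have hc1 : c + 1 != 0 by rewrite gt_eqF // ltr_pwDr.
have e : 2 * ((-b/(c+1)) * b) + (-b/(c+1)) * ((-b/(c+1)) * c)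
        = - (b^+2 * (c+2)) / (c+1)^+2 by field.
have h := ht (-b/(c+1)).
have h2 : 0 <= - (b^+2 * (c+2)) / (c+1)^+2 by rewrite -e; lra.
have hq : 0 < (c+1)^+2 by rewrite exprn_gt0 // ltr_pwDr.
have h3 : 0 <= - (b^+2 * (c+2)).
  by have := mulr_ge0 h2 (ltW hq); rewrite divfK // gt_eqF.
have h4 : b^+2 <= 0 by nra.
have : b^+2 == 0 by rewrite eq_le h4 sqr_ge0.
by rewrite sqrf_eq0 => /eqP.
Qed.

End G.
Theorem theorem2 (R : rcfType) (n m : nat) (Hm : (2 <= m)%N)
  (P : 'I_m -> 'rV[R]_n) (HP : general_position P)
  (Q : nat -> 'rV[R]_n) (lam : nat -> 'I_m -> R)
  (HQ0 : is_equidistant P (Q 0%N))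
  (HQ : forall k : nat, (1 <= k <= m - 2)%N -> is_proj (Lk P k) (Q k.-1) (Q k))
  (Hlam : forall k : nat, (k <= m - 2)%N -> is_bary P (Q k) (lam k))
  (K : nat) (HK : (K <= m - 2)%N)
  (Hbefore : forall k : nat, (k < K)%N ->
     forall i : 'I_m,
       ((val i < k)%N -> lam k i = 0) /\
       (val i = k -> lam k i < 0) /\
       ((k < val i)%N -> 0 < lam k i))
  (HKlam : forall i : 'I_m,
       ((val i < K)%N -> lam K i = 0) /\
       ((K <= val i)%N -> 0 < lam K i))
  (iK : 'I_m) (HiK : val iK = K) :
  (forall Qs : 'rV[R]_n, sec_center P Qs <-> Qs = Q K) /\
  (forall d : R, sec_radius P d <-> d = dist (P iK) (Q K)).
Proof.
set QK := Q K.
have A : forall j (i : 'I_m), (1 <= j <= K)%N -> (j <= val i)%N ->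
    ip (Q j - Q j.-1) (P i - P iK) = 0.
  move=> j i hj ji.
  have hj' : (1 <= j <= m - 2)%N by lia.
  have pr := HQ j hj'.
  have jK : (j <= val iK)%N by lia.
  have -> : P i - P iK = (P i - Q j) - (P iK - Q j).
    by apply/rowP => c; rewrite !mxE; ring.
  by rewrite ipBr (proj_orth pr (Lk_P P ji)) (proj_orth pr (Lk_P P jK)) subrr.
have decomp : forall j, Q j.-1 - QK = (Q j - QK) - (Q j - Q j.-1).
  by move=> j; apply/rowP => c; rewrite !mxE; ring.
have B : forall t, (t <= K)%N -> forall i : 'I_m, (K <= val i)%N ->
    ip (Q (K - t)%N - QK) (P i - P iK) = 0.
  elim=> [|t IH] ht i hi; first by rewrite subn0 subrr ip0l.
  have -> : (K - t.+1)%N = (K - t).-1 by rewrite subnS.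
  rewrite decomp ipBl IH ?A ?subr0 //; lia.
have C : forall t, (t <= K)%N -> forall i : 'I_m, ((K - t)%N <= val i)%N ->
    ip (Q (K - t)%N - QK) (P i - P iK) <= 0.
  elim=> [|t IH] ht i hi; first by rewrite subn0 subrr ip0l.
  have ek : (K - t.+1)%N = (K - t).-1 by rewrite subnS.
  have hgt : forall j : 'I_m, (K - t.+1 < val j)%N ->
      ip (Q (K - t.+1)%N - QK) (P j - P iK) <= 0.
    move=> j hj; rewrite ek decomp ipBl A ?subr0; [apply: IH|..]; lia.
  case: (ltnP (K - t.+1) (val i)) => hki; first exact: hgt.
  set k := (K - t.+1)%N in hki hi hgt *.
  have hk : (k < K)%N by lia.
  have vi : val i = k by lia.
  have [s1 ek'] := Hlam k (ltac:(lia)).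
  have [hb1 [hb2 hb3]] := Hbefore k hk i.
  set E := Q k - QK.
  have hEE : 0 <= ip E E := ip_ge0 E.
  have hEK : ip E (QK - P iK) = 0.
    have [sK eK] := Hlam K HK.
    rewrite {1}/QK eK ip_bary //; apply: big1 => j _.
    case: (ltnP (val j) K) => hj; first by rewrite (HKlam j).1 // mul0r.
    have := B (K - k)%N (leq_subr _ _) j hj.
    by rewrite subKn ?(ltnW hk) // => ->; rewrite mulr0.
  have hsum : ip E (Q k - P iK) = \sum_j lam k j * ip E (P j - P iK).
    by rewrite {1}ek' ip_bary.
  have hsplit : \sum_j lam k j * ip E (P j - P iK) <= lam k i * ip E (P i - P iK).
    rewrite (bigD1 i) //=.
    have : \sum_(j | j != i) lam k j * ip E (P j - P iK) <= 0.
      apply: sumr_le0 => j hj.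
      case: (ltnP (val j) k) => hjk.
        by rewrite (Hbefore k hk j).1 // mul0r.
      have hjk' : (k < val j)%N.
        rewrite ltn_neqAle hjk andbT; apply/eqP => e.
        by move/eqP: hj; apply; apply/val_inj; rewrite /= vi.
      by rewrite pmulr_rle0 ?hgt // ((Hbefore k hk j).2.2 hjk').
    lra.
  have hdec : ip E (Q k - P iK) = ip E E + ip E (QK - P iK).
    by rewrite -ipDr; congr ip; apply/rowP => c; rewrite /E !mxE; ring.
  have hl := hb2 vi.
  rewrite -/E.
  nra.
have Ceq : forall i : 'I_m, ip (Q 0%N - QK) (P i - P iK) <= 0.
  by move=> i; have := C K (leqnn K) i; rewrite subnn; apply.
have Beq : forall i : 'I_m, (K <= val i)%N -> ip (Q 0%N - QK) (P i - P iK) = 0.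
  by move=> i hi; have := B K (leqnn K) i hi; rewrite subnn.
have eqd : forall i, ip (P i - Q 0%N) (P i - Q 0%N) = ip (P iK - Q 0%N) (P iK - Q 0%N).
  move=> i; have := HQ0.2 i iK; rewrite !dist_ip => /eqP.
  by rewrite eqr_sqrt ?ip_ge0 // => /eqP.
set r2 := ip (P iK - QK) (P iK - QK).
have hr2 : 0 <= r2 by apply: ip_ge0.
have dist_sq : forall i, ip (P i - QK) (P i - QK) = r2 + 2 * ip (Q 0%N - QK) (P i - P iK).
  move=> i; rewrite /r2.
  have -> : P i - QK = (P i - Q 0%N) + (Q 0%N - QK) by apply/rowP => c; rewrite !mxE; ring.
  have -> : P iK - QK = (P iK - Q 0%N) + (Q 0%N - QK) by apply/rowP => c; rewrite !mxE; ring.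
  have -> : P i - P iK = (P i - Q 0%N) - (P iK - Q 0%N) by apply/rowP => c; rewrite !mxE; ring.
  rewrite (ip_expand (P i - Q 0%N)) (ip_expand (P iK - Q 0%N)) eqd !(ipC (Q 0%N - QK)) (ipBl (P i - Q 0%N)); ring.
have hle : forall i, ip (P i - QK) (P i - QK) <= r2.
  by move=> i; rewrite dist_sq; have := Ceq i; lra.
have heqK : forall i : 'I_m, (K <= val i)%N -> ip (P i - QK) (P i - QK) = r2.
  by move=> i hi; rewrite dist_sq Beq // mulr0 addr0.
have [sK eK] := Hlam K HK.
have hlam0 : forall i, 0 <= lam K i.
  move=> i; case: (ltnP (val i) K) => h; first by rewrite (HKlam i).1.
  exact: ltW ((HKlam i).2 h).
have hE : forall Q', \sum_i lam K i * ip (P i - Q') (P i - Q') = r2 + ip (QK - Q') (QK - Q').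
  move=> Q'; set c := ip (QK - Q') (QK - Q').
  have hx : \sum_i lam K i * ip (P i - QK) (QK - Q') = 0.
    rewrite (eq_bigr (fun i => lam K i * ip (QK - Q') (P i - QK))); last first.
      by move=> i _; rewrite ipC.
    by rewrite -ip_bary // -eK subrr ip0r.
  rewrite (eq_bigr (fun i => (r2 + c) * lam K i + 2 * (lam K i * ip (P i - QK) (QK - Q')))).
    by rewrite big_split /= -mulr_sumr -mulr_sumr sK hx; ring.
  move=> i _.
  have -> : P i - Q' = (P i - QK) + (QK - Q') by apply/rowP => c'; rewrite !mxE; ring.
  rewrite ip_expand -/c.
  case: (ltnP (val i) K) => h; first by rewrite (HKlam i).1 //; ring.
  by rewrite heqK //; ring.
have hlow : forall Q', r2 + ip (QK - Q') (QK - Q') <= maxdist P Q' ^+ 2.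
  move=> Q'; rewrite -hE.
  have hM0 : 0 <= maxdist P Q' by apply: bigmax_ge_id.
  have hd : forall i, ip (P i - Q') (P i - Q') <= maxdist P Q' ^+ 2.
    move=> i; have h1 : dist (P i) Q' <= maxdist P Q' by apply: (le_bigmax _ (fun i => dist (P i) Q')).
    have h0 : 0 <= dist (P i) Q' by rewrite dist_ip sqrtr_ge0.
    have h2 : dist (P i) Q' ^+ 2 = ip (P i - Q') (P i - Q') by rewrite dist_ip sqr_sqrtr // ip_ge0.
    rewrite -h2; nra.
  rewrite -[X in _ <= X]mul1r -sK mulr_suml; apply: ler_sum => i _.
  by apply: ler_wpM2l.
have hMK : maxdist P QK = Num.sqrt r2.
  apply/le_anti/andP; split.
    apply: bigmax_le; first exact: sqrtr_ge0.
    by move=> i _; rewrite dist_ip ler_sqrt.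
  by rewrite /r2 -dist_ip; apply: (le_bigmax _ (fun i => dist (P i) QK)).
have part1 : forall Qs, sec_center P Qs <-> Qs = QK.
  move=> Qs; split.
    move=> hs; have := hs QK; rewrite hMK => h.
    have hM0 : 0 <= maxdist P Qs by apply: bigmax_ge_id.
    have h2 : maxdist P Qs ^+ 2 <= r2.
      by rewrite -(sqr_sqrtr hr2); have := sqrtr_ge0 r2; nra.
    have := hlow Qs; have := ip_ge0 (QK - Qs) => h3 h4.
    have : ip (QK - Qs) (QK - Qs) = 0 by lra.
    by move/ip_eq0/subr0_eq.
  move=> -> Q'; rewrite hMK.
  have hM0 : 0 <= maxdist P Q' by apply: bigmax_ge_id.
  rewrite -(ger0_norm hM0) -sqrtr_sqr ler_sqrt ?sqr_ge0 //.
  by have := hlow Q'; have := ip_ge0 (QK - Q'); lra.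
split; first exact: part1.
move=> d; split.
  move=> [Qs [hs ->]]; move/part1: hs => ->.
  by rewrite hMK dist_ip.
move=> ->; exists QK; split; first exact/part1.
by rewrite hMK dist_ip.
Qed.
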